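(* Let $n$ be a positive integer and let $A\subseteq\mathbb{Z}/n\mathbb{Z}$ be a basis of $\mathbb{Z}/n\mathbb{Z}$. Then $|A|\cdot\rho(A)<2n$.
   Context: A subset $A\subseteq\mathbb{Z}/n\mathbb{Z}$ is a basis if $hA=\mathbb{Z}/n\mathbb{Z}$ for some positive integer $h$, where $hA=\{a_1+\dots+a_h: a_i\in A\}$; the least such $h$ is denoted $\rho(A)$. *)

(* Defs.v *)
(* Z/nZ is modelled by 'I_n with addition mod n
   (avoids the 'Z_n convention which breaks for n = 1). *)
From mathcomp Require Import all_boot.
Set Implicit Arguments. Unset Strict Implicit. Unset Printing Implicit Defensive.

Definition sumset (n h : nat) (A : {set 'I_n}) : {set 'I_n} :=
  [set x : 'I_n | [exists t : h.-tuple 'I_n,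
     all (fun a => a \in A) t && ((\sum_(a <- t) (a : nat)) %% n == x)]].

Definition is_basis (n : nat) (A : {set 'I_n}) : Prop :=
  exists h, 0 < h /\ sumset h A = [set: 'I_n].

Definition is_rho (n : nat) (A : {set 'I_n}) (r : nat) : Prop :=
  [/\ 0 < r, sumset r A = [set: 'I_n] &
      forall h, 0 < h -> sumset h A = [set: 'I_n] -> r <= h].

(* Main.v *)
Require Import Defs.
From mathcomp Require Import all_boot all_algebra.
From Stdlib Require Import Lia.
Set Implicit Arguments. Unset Strict Implicit. Unset Printing Implicit Defensive.
Import GRing.Theory.

Ltac tolia := repeat match goal with
  | H : is_true (_ <= _) |- _ => apply (elimT leP) in H
  | H : is_true (_ < _) |- _ => apply (elimT ltP) in H
  | H : is_true (_ == _) |- _ => apply (elimT eqP) in H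
  | |- is_true (_ <= _) => apply/leP
  | |- is_true (_ < _) => apply/ltP
  end; repeat (rewrite -!plusE || rewrite -!multE || rewrite -!minusE);
  repeat match goal with H : _ |- _ => progress (rewrite -!plusE in H || rewrite -!multE in H || rewrite -!minusE in H) end.

Section Atoms.
Variable G : finZmodType.
Implicit Types X Y B : {set G}.

Definition ssum X B : {set G} := [set (x + b)%R | x in X, b in B].
Definition sneg B : {set G} := [set (- b)%R | b in B].
Definition strans X (g : G) : {set G} := [set (x + g)%R | x in X].

Lemma ssumP X B z : reflect (exists2 x, x \in X & exists2 b, b \in B & z = (x + b)%R) (z \in ssum X B).
Proof.
apply: (iffP imset2P) => [[x b hx hb ->]|[x hx [b hb ->]]]; first by exists x => //; exists b.
by exists x b.
Qed.

Lemma mem_ssum X B x b : x \in X -> b \in B -> (x + b)%R \in ssum X B.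
Proof. by move=> hx hb; apply/ssumP; exists x => //; exists b. Qed.

Lemma card_strans X g : #|strans X g| = #|X|.
Proof. by apply: card_imset => x y /addIr. Qed.

Lemma strans_mem X g x : (x \in strans X g) = ((x - g)%R \in X).
Proof.
apply/imsetP/idP => [[y hy ->]|h]; first by rewrite addrK.
by exists (x - g)%R => //; rewrite subrK.
Qed.

Lemma ssum_strans X B g : ssum (strans X g) B = strans (ssum X B) g.
Proof.
apply/setP => z; rewrite strans_mem; apply/ssumP/ssumP.
  case=> y; rewrite strans_mem => hy [b hb ->]; exists (y - g)%R => //; exists b => //.
  by rewrite addrAC.
case=> x hx [b hb e]; exists (x + g)%R; first by rewrite strans_mem addrK.
exists b => //; by rewrite -addrA (addrC g) addrA -e subrK.
Qed.

Lemma ssumS X Y B : X \subset Y -> ssum X B \subset ssum Y B.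
Proof.
move=> /subsetP s; apply/subsetP => z /ssumP [x hx [b hb ->]].
by apply: mem_ssum => //; apply: s.
Qed.

Lemma ssumU X Y B : ssum (X :|: Y) B = ssum X B :|: ssum Y B.
Proof.
apply/setP => z; rewrite inE; apply/ssumP/orP.
  case=> x; rewrite inE => /orP [] hx [b hb ->]; [left|right]; exact: mem_ssum.
case=> /ssumP [x hx [b hb ->]]; exists x; rewrite ?inE ?hx ?orbT //; by exists b.
Qed.

Lemma ssumI X Y B : ssum (X :&: Y) B \subset ssum X B :&: ssum Y B.
Proof.
by rewrite subsetI !ssumS // ?subsetIl ?subsetIr.
Qed.

Lemma card_ssum_r X B x : x \in X -> #|B| <= #|ssum X B|.
Proof.
move=> hx. have -> : #|B| = #|[set (x + b)%R | b in B]|.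
  by rewrite card_imset //; apply: addrI.
apply: subset_leq_card; apply/subsetP => z /imsetP [b hb ->]; exact: mem_ssum.
Qed.

Lemma card_ssum_l X B b : b \in B -> #|X| <= #|ssum X B|.
Proof.
move=> hb; rewrite -(card_strans X b); apply: subset_leq_card.
apply/subsetP => z; rewrite strans_mem => h.
by rewrite -(subrK b z); apply: mem_ssum.
Qed.


Lemma card_ssum1 B x : #|ssum [set x] B| = #|B|.
Proof.
have -> : ssum [set x] B = [set (x + b)%R | b in B].
  apply/setP => z; apply/ssumP/imsetP.
    by case=> y; rewrite inE => /eqP -> [b hb ->]; exists b.
  by case=> b hb ->; exists x; rewrite ?inE //; exists b.
by rewrite card_imset //; apply: addrI.
Qed.

Lemma card_lt_setT (X : {set G}) : X != setT -> #|X| < #|G|.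
Proof. by move=> h; rewrite -cardsT; apply: proper_card; rewrite properT. Qed.

Lemma card_setT_eq (X : {set G}) : #|X| = #|G| -> X = setT.
Proof. by move=> h; apply/eqP; apply/negPn/negP => /card_lt_setT; rewrite h ltnn. Qed.

Section Kappa.
Variable B : {set G}.
Hypothesis B0 : B != set0.
Hypothesis BT : B != setT.

Definition cand X := (X != set0) /\ ssum X B != setT.
Definition frag k X := cand X /\ #|ssum X B| = #|X| + k.
Definition is_kappa k := (exists X, frag k X) /\ forall X, cand X -> #|X| + k <= #|ssum X B|.
Definition is_atom k a := (exists X, frag k X /\ #|X| = a) /\ forall X, frag k X -> a <= #|X|.

Lemma cand1 x : cand [set x].
Proof.
split; first by apply/set0Pn; exists x; rewrite inE.
by apply/negP => /eqP h; have := card_lt_setT BT; rewrite -(card_ssum1 B x) h cardsT ltnn.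
Qed.

Lemma kappa_exists : exists k, is_kappa k.
Proof.
have [b0 hb0] := set0Pn _ B0.
pose P k := [exists X, [&& X != set0, ssum X B != setT & #|ssum X B| == #|X| + k]].
have ex : exists k, P k.
  exists (#|B| - 1); apply/existsP; exists [set 0%R]; have [h1 h2] := cand1 0%R.
  rewrite h1 h2 card_ssum1 cards1 /=; apply/eqP; rewrite subnKC // card_gt0; exact: B0.
case: (ex_minnP ex) => k /existsP [X /and3P [h1 h2 /eqP h3]] hmin.
exists k; split; first by exists X.
move=> Y [hY1 hY2]; have hle := card_ssum_l Y hb0.
have := hmin (#|ssum Y B| - #|Y|); rewrite /P => h.
have : k <= #|ssum Y B| - #|Y|.
  by apply: h; apply/existsP; exists Y; rewrite hY1 hY2 (subnKC hle) eqxx.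
by move=> hk; tolia; lia.
Qed.

Lemma atom_exists k : is_kappa k -> exists a, is_atom k a.
Proof.
move=> [[X0 hX0] hmin].
pose P a := [exists X, [&& X != set0, ssum X B != setT, #|ssum X B| == #|X| + k & #|X| == a]].
have ex : exists a, P a.
  by exists #|X0|; apply/existsP; exists X0; case: hX0 => [[-> ->] ->]; rewrite !eqxx.
case: (ex_minnP ex) => a /existsP [X /and4P [h1 h2 /eqP h3 /eqP h4]] am.
exists a; split; first by exists X.
move=> Y [[hY1 hY2] hY3]; apply: am; apply/existsP; exists Y.
by rewrite hY1 hY2 hY3 !eqxx.
Qed.

Lemma frag_strans k X g : frag k X -> frag k (strans X g).
Proof.
move=> [[h1 h2] h3]; split; last by rewrite ssum_strans !card_strans.
split.
  apply/set0Pn; have [x hx] := set0Pn _ h1; exists (x + g)%R; by rewrite strans_mem addrK.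
rewrite ssum_strans; apply/negP => /eqP h; move/negP: h2; apply; apply/eqP.
apply: card_setT_eq; by rewrite -(card_strans _ g) h cardsT.
Qed.

Section Core.
Variables k a : nat.
Hypothesis hk : is_kappa k.
Hypothesis ha : is_atom k a.
Hypothesis hdual : forall X, frag k X -> a <= #|~: ssum X B|.

Lemma atom_inter X Y z : frag k X -> #|X| = a -> frag k Y -> #|Y| = a ->
  z \in X -> z \in Y -> X = Y.
Proof.
move=> fX cX fY cY zX zY.
have dX := hdual fX.
case: fX => [[X0 XT] sX]; case: fY => [[Y0 YT] sY].
have km : 1 + k <= #|B|.
  by have := hk.2 _ (cand1 z); rewrite cards1 card_ssum1.
have uiS := cardsUI (ssum X B) (ssum Y B).
have uiX := cardsUI X Y.
have cC := cardsC (ssum X B).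
have hI := subset_leq_card (ssumI X Y B).
have zI : z \in X :&: Y by rewrite inE zX zY.
have hm := card_ssum_r B zI.
have UT : ssum (X :|: Y) B != setT.
  apply/negP => /eqP h; move: uiS; rewrite -ssumU h cardsT => e.
  have h2 := card_lt_setT BT. tolia. lia.
have hU : #|X :|: Y| + k <= #|ssum (X :|: Y) B|.
  apply: hk.2; split => //; apply/set0Pn; exists z; by rewrite inE zX.
rewrite ssumU in hU.
have IT : ssum (X :&: Y) B != setT.
  apply/negP => /eqP h; have := ssumS B (subsetIl X Y); rewrite h => hs.
  move/negP: XT; apply; by rewrite eqEsubset hs subsetT.
have hI2 : #|X :&: Y| + k <= #|ssum (X :&: Y) B|.
  apply: hk.2; split => //; apply/set0Pn; by exists z.
have fI : frag k (X :&: Y).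
  split; first (split => //; apply/set0Pn; by exists z).
  apply/eqP; rewrite eqn_leq hI2 andbT. tolia. lia.
have aI := ha.2 _ fI.
have eX : X :&: Y = X by apply/eqP; rewrite eqEcard subsetIl cX.
have eY : X :&: Y = Y by apply/eqP; rewrite eqEcard subsetIr cY.
by rewrite -eX eY.
Qed.

Lemma atom_subgroup : exists K, frag k K /\ (0%R \in K) /\
  (forall x y, x \in K -> y \in K -> (y - x)%R \in K).
Proof.
have [[X0 [fX0 cX0]] _] := ha.
have [x0 hx0] : exists x0, x0 \in X0.
  by case: fX0 => [[h _] _]; have [x hx] := set0Pn _ h; exists x.
pose K := strans X0 (- x0)%R.
have fK : frag k K by apply: frag_strans.
have cK : #|K| = a by rewrite card_strans.
have K0 : (0%R \in K) by rewrite strans_mem opprK add0r.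
exists K; split => //; split => // x y hx hy.
have e : strans K (- x)%R = K.
  apply: (@atom_inter _ _ 0%R) => //; first exact: frag_strans.
    by rewrite card_strans.
  by rewrite strans_mem opprK add0r.
by rewrite -e strans_mem opprK subrK.
Qed.

End Core.
End Kappa.

Lemma snegK B : sneg (sneg B) = B.
Proof.
apply/setP => z; apply/imsetP/idP.
  by case=> y /imsetP [b hb ->] ->; rewrite opprK.
by move=> h; exists (- z)%R; rewrite ?opprK //; apply/imsetP; exists z.
Qed.

Lemma card_sneg B : #|sneg B| = #|B|.
Proof. by apply: card_imset; apply: oppr_inj. Qed.

Lemma sneg_mem B z : (z \in sneg B) = ((- z)%R \in B).
Proof.
apply/imsetP/idP; first by case=> b hb ->; rewrite opprK.
by move=> h; exists (- z)%R; rewrite ?opprK.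
Qed.

Lemma sneg0 B : B != set0 -> sneg B != set0.
Proof. by move=> h; rewrite -card_gt0 card_sneg card_gt0. Qed.

Lemma snegT B : B != setT -> sneg B != setT.
Proof.
move=> h; apply/negP => /eqP e; move/negP: h; apply; apply/eqP.
by apply: card_setT_eq; rewrite -card_sneg e cardsT.
Qed.

Lemma ssumT B : B != set0 -> ssum setT B = setT.
Proof.
move=> /set0Pn [b hb]; apply/setP => z; rewrite inE.
by rewrite -(subrK b z); apply: mem_ssum; rewrite ?inE.
Qed.

Lemma dual_frag B k X : frag B k X ->
  cand (sneg B) (~: ssum X B) /\ #|ssum (~: ssum X B) (sneg B)| <= #|~: ssum X B| + k.
Proof.
move=> [[X0 XT] e].
have sub : ssum (~: ssum X B) (sneg B) \subset ~: X.
  apply/subsetP => z /ssumP [y hy [b hb ->]]; rewrite inE; apply/negP => hz.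
  move: hy; rewrite inE; move/negP; apply.
  rewrite sneg_mem in hb. by rewrite -(addrK b y); apply: mem_ssum.
have c1 := subset_leq_card sub.
split; first split.
- apply/negP => /eqP h; move/negP: XT; apply; by rewrite -(setCK (ssum X B)) h setC0.
- apply/negP => /eqP h; move: sub; rewrite h => s.
  have [x hx] := set0Pn _ X0. have := subsetP s x; rewrite !inE hx => /(_ isT) //.
- have h1 := cardsC X; have h2 := cardsC (ssum X B). tolia. lia.
Qed.

Lemma kappa_le B k k' : B != set0 -> B != setT ->
  is_kappa B k -> is_kappa (sneg B) k' -> k' <= k.
Proof.
move=> B0 BT [[X fX] _] [_ m'].
have [c h] := dual_frag fX.
have h2 := m' _ c. tolia. lia.
Qed.

Lemma side B k a a' : B != set0 -> B != setT ->
  is_kappa B k -> is_kappa (sneg B) k -> is_atom B k a -> is_atom (sneg B) k a' ->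
  a <= a' -> exists K, frag B k K /\ (0%R \in K) /\
  (forall x y, x \in K -> y \in K -> (y - x)%R \in K).
Proof.
move=> B0 BT kB kB' aB aB' le.

apply: (atom_subgroup BT kB aB) => X fX.
have [c h] := dual_frag fX.
have f' : frag (sneg B) k (~: ssum X B).
  split => //; apply/eqP; rewrite eqn_leq h /=; exact: kB'.2.
have h2 := aB'.2 _ f'. tolia. lia.
Qed.

Lemma ssum_sneg (K : {set G}) B : (forall x, x \in K -> (- x)%R \in K) ->
  ssum K (sneg B) = sneg (ssum K B).
Proof.
move=> hK; apply/setP => z; rewrite sneg_mem; apply/ssumP/ssumP.
  case=> x hx [b hb ->]; exists (- x)%R; first exact: hK.
  exists (- b)%R; first by rewrite -sneg_mem.
  by rewrite opprD.
case=> x hx [b hb e]; exists (- x)%R; first exact: hK.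
exists (- b)%R; first by rewrite sneg_mem opprK.
by rewrite -opprD -e opprK.
Qed.

Theorem kneser_lite B : B != set0 -> B != setT ->
  exists K k, [/\ K != setT, 0%R \in K,
   (forall x y, x \in K -> y \in K -> (y - x)%R \in K),
   #|ssum K B| = #|K| + k &
   forall X, X != set0 -> ssum X B != setT -> #|X| + k <= #|ssum X B| ].
Proof.
move=> B0 BT.
have B0' := sneg0 B0; have BT' := snegT BT.
have [k kB] := kappa_exists B0 BT.
have [k' kB'] := kappa_exists B0' BT'.
have e : k' = k.
  apply/eqP; rewrite eqn_leq (kappa_le B0 BT kB kB') /=.
  apply: (kappa_le B0' BT' kB'); by rewrite snegK.
subst k'.
have [a aB] := atom_exists kB; have [a' aB'] := atom_exists kB'.
have closedN : forall K : {set G}, 0%R \in K ->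
    (forall x y, x \in K -> y \in K -> (y - x)%R \in K) ->
    forall x, x \in K -> (- x)%R \in K.
  by move=> K h0 hs x hx; rewrite -sub0r; apply: hs.
have KT : forall (K D : {set G}), D != set0 -> ssum K D != setT -> K != setT.
  by move=> K C C0 h; apply/negP => /eqP eK; move: h; rewrite eK ssumT // eqxx.
case: (leqP a a') => hle.
  have [K [[[K0 KBT] eK] [h0 hs]]] := side B0 BT kB kB' aB aB' hle.
  exists K, k; split => //; first exact: (KT K B).
  by move=> X X0 XT; apply: kB.2.
have [K [[[K0 KBT] eK] [h0 hs]]] : exists K, frag (sneg B) k K /\ (0%R \in K) /\
  (forall x y, x \in K -> y \in K -> (y - x)%R \in K).
  apply: (side B0' BT' kB' _ aB' _ (ltnW hle)); by rewrite snegK.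
exists K, k; split => //; first exact: (KT K (sneg B)).
  by rewrite -eK ssum_sneg ?card_sneg //; apply: closedN.
by move=> X X0 XT; apply: kB.2.
Qed.

End Atoms.

Lemma valZpD (n : nat) (x y : 'I_n.+1) : val (x + y)%R = (val x + val y) %% n.+1.
Proof. by []. Qed.
Lemma natZpD (n : nat) (x y : 'I_n.+1) : nat_of_ord (x + y)%R = (x + y) %% n.+1.
Proof. by []. Qed.

Lemma mem_sumset (n : nat) h (A : {set 'I_n}) (x : 'I_n) :
  reflect (exists s : seq 'I_n, [/\ size s = h, all (fun a => a \in A) s &
             (\sum_(a <- s) (a : nat)) %% n = x]) (x \in sumset h A).
Proof.
rewrite inE; apply: (iffP existsP).
  by case=> t /andP [h1 /eqP h2]; exists t; split => //; rewrite size_tuple.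
case=> s [hs h1 h2]; have hs' : size s == h by rewrite hs.
by exists (Tuple hs'); rewrite /= h1 h2 eqxx.
Qed.
Section Main.
Variable n : nat.
Local Notation N := n.+1.
Implicit Types A : {set 'I_N}.

Lemma sumset0 A : sumset 0 A = [set 0%R].
Proof.
apply/setP => x; apply/mem_sumset/set1P.
  case=> s [hs _ e]; case: s hs e => //= _; rewrite big_nil mod0n => e.
  by apply: val_inj => /=; rewrite -e.
move=> ->; exists [::]; split => //; by rewrite big_nil mod0n.
Qed.

Lemma sumsetS k A : sumset k.+1 A = ssum (sumset k A) A.
Proof.
apply/setP => x; apply/mem_sumset/ssumP.
  case=> s [hs hA e]; case: s hs hA e => //= a s [hs] /andP [ha hA].
  rewrite big_cons => e.
  have y_lt : (\sum_(b <- s) (b : nat)) %% N < N by apply: ltn_pmod.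
  exists (Ordinal y_lt); last (exists a => //).
    by apply/mem_sumset; exists s; split.
  apply: val_inj; rewrite valZpD /= -e modnDml addnC.
  done.
case=> y /mem_sumset [s [hs hA e]] [a ha ->].
exists (a :: s); split; rewrite /= ?hs ?ha ?hA //.
by rewrite big_cons -e modnDml addnC.
Qed.


Lemma ssum0r (X : {set 'I_N}) : ssum X set0 = set0.
Proof. by apply/setP => z; rewrite inE; apply/ssumP => [[x _ [b]]]; rewrite inE. Qed.

Lemma sumset1 A : sumset 1 A = A.
Proof.
rewrite sumsetS sumset0; apply/setP => z; apply/ssumP/idP.
  by case=> y; rewrite in_set1 => /eqP -> [b hb ->]; rewrite add0r.
by move=> h; exists 0%R; rewrite ?in_set1 //; exists z => //; rewrite add0r.
Qed.

Theorem main_N A r : is_rho A r -> #|A| * r < 2 * N.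
Proof.
move=> [r0 rT rmin].
have cA : #|A| <= N by have := max_card A; rewrite card_ord.
case: (ltnP r 2) => hr.
  have -> : r = 1 by apply/eqP; rewrite eqn_leq -ltnS hr r0.
  rewrite muln1; tolia; lia.
have A0 : A != set0.
  apply/negP => /eqP eA; move: rT; case: r r0 {hr rmin} => // r' _.
  rewrite sumsetS eA ssum0r => /setP /(_ ord0); by rewrite !inE.
have AT : A != setT.
  apply/negP => /eqP eA; have := rmin 1 isT; rewrite sumset1 eA => /(_ erefl).
  by rewrite leqNgt hr.
have ST : forall j, 0 < j -> j < r -> sumset j A != setT.
  move=> j j0 jr; apply/negP => /eqP e; have := rmin j j0 e; by rewrite leqNgt jr.
have S0 : forall j, sumset j A != set0.
  elim=> [|j IH]; first by rewrite sumset0; apply/set0Pn; exists 0%R; rewrite in_set1.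
  have [y hy] := set0Pn _ IH; have [a ha] := set0Pn _ A0.
  rewrite sumsetS; apply/set0Pn; exists (y + a)%R; exact: mem_ssum.
have [K [k [KT K0 Ks eK hk]]] := kneser_lite A0 AT.
have gr : forall j, 0 < j -> j < r -> #|A| + (j - 1) * k <= #|sumset j A|.
  elim=> [//|j IH] _ jr.
  case: j IH jr => [|j] IH jr; first by rewrite sumset1 mul0n addn0.
  have h1 := IH isT (ltnW jr).
  have h3 : ssum (sumset j.+1 A) A != setT by rewrite -sumsetS; exact: (ST j.+2 isT jr).
  have h2 := hk _ (S0 j.+1) h3.
  rewrite -sumsetS in h2.
  have h4 : #|sumset j.+1 A| + k <= #|sumset j.+2 A| := h2.
  clear -h1 h4. rewrite !subSS subn0 in h1 *. rewrite mulSn. tolia. lia.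
have r1 : 0 < r.-1 by rewrite -ltnS prednK //; apply: ltnW.
have r2 : r.-1 < r by rewrite prednK // ltnSn.
have g := gr r.-1 r1 r2.
have lt := card_lt_setT (ST r.-1 r1 r2).
rewrite card_ord in lt.
have mK : #|A| <= #|ssum K A| by apply: card_ssum_r K0.
have K1 : 0 < #|K| by rewrite card_gt0; apply/set0Pn; exists 0%R.
have kK : #|K| <= k.
  case: (boolP [exists x in A, exists y in A, (y - x)%R \notin K]).
    move=> /existsP [x /andP [hx /existsP [y /andP [hy hyx]]]].
    have sub : forall x, x \in A -> strans K x \subset ssum K A.
      move=> u hu; apply/subsetP => z; rewrite strans_mem => hz.
      by rewrite -(subrK u z); apply: mem_ssum.
    have dis : strans K x :&: strans K y = set0.
      apply/setP => z; rewrite !inE !strans_mem; apply/negP => /andP [h1 h2].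
      have := Ks _ _ h2 h1.
      have -> : ((z - x) - (z - y) = y - x)%R by rewrite opprB addrC addrA subrK.
      by move: hyx => /negP.
    have := cardsU (strans K x) (strans K y); rewrite dis cards0 subn0 !card_strans => e.
    have su : strans K x :|: strans K y \subset ssum K A by rewrite subUset !sub.
    have h := subset_leq_card su; rewrite e eK leq_add2l in h; exact: h.
  move=> hno; exfalso.
  have hall : forall x y, x \in A -> y \in A -> (y - x)%R \in K.
    move=> x y hx hy; apply/negPn/negP => h; move/negP: hno; apply.
    by apply/existsP; exists x; rewrite hx; apply/existsP; exists y; rewrite hy.
  have Kadd : forall u v, u \in K -> v \in K -> (u + v)%R \in K.
    move=> u v hu hv; have hv' : (- v)%R \in K by rewrite -sub0r; apply: Ks.
    by rewrite -(opprK v); apply: Ks.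
  have [a0 ha0] := set0Pn _ A0.
  have cl : forall j z, z \in sumset j A -> (z - a0 *+ j)%R \in K.
    elim=> [|j IH] z.
      by rewrite sumset0 in_set1 => /eqP ->; rewrite mulr0n subr0.
    rewrite sumsetS => /ssumP [y hy [a ha ->]].
    rewrite mulrS opprD (addrC (- a0)%R) addrACA.
    apply: Kadd; [exact: IH | exact: hall].
  move/negP: KT; apply; apply/eqP/setP => w; rewrite inE.
  have := cl r (w + a0 *+ r)%R; rewrite rT inE addrK; exact.
have mK' : #|A| <= 2 * k by rewrite mul2n -addnn; apply: (leq_trans mK); rewrite eK leq_add2r.
move: g lt; case: (r) hr => [|[|r']] // _ g lt.
rewrite /= subSS subn0 in g.
have hm : #|A| * r' <= 2 * k * r' by rewrite leq_mul2r mK' orbT.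
rewrite !mulnS (mulnC r' k) in g *.
rewrite -mulnA in hm. simpl in lt. have lt2 : #|A| + k * r' < N := leq_ltn_trans g lt. clear -lt2 hm. tolia. lia.
Qed.

End Main.

Theorem mainTheorem5 (n : nat) (A : {set 'I_n}) (r : nat) :
  0 < n -> is_basis A -> is_rho A r -> #|A| * r < 2 * n.
Proof.
case: n A => [//|n'] A _ _ hr; exact: main_N hr.
Qed.
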